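(* Let $T$ be a linear operator in $H$. If there exist $z\in W_e(T)$ and $w\in\mathbb C\setminus\{0\}$ with $z+w(0,\infty)\subset W(T)$, then $z+w[0,\infty)\subset W_e(T)$.
   Context: $H$ is a separable infinite-dimensional complex Hilbert space; operators need not be closed, closable or densely defined. $W(T)=\{\langle Tx,x\rangle:x\in\operatorname{dom}(T),\|x\|=1\}$, $W_e(T)=\{\lambda:\exists x_n\in\operatorname{dom}(T),\|x_n\|=1,x_n\stackrel{w}{\to}0,\langle Tx_n,x_n\rangle\to\lambda\}$. *)

(* Defs.v *)
(* The complex numbers are  R[i]  for  R : realType
   (mathcomp-real-closed's [complex]); a complex Hilbert space is given by
   an  R[i]-module  V  with an inner product  ip  satisfying the axioms below. *)
From mathcomp Require Import all_boot all_order all_algebra.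
From mathcomp Require Import reals.
From mathcomp.real_closed Require Import complex.
Set Implicit Arguments. Unset Strict Implicit. Unset Printing Implicit Defensive.
Import Order.TTheory GRing.Theory Num.Theory.
Local Open Scope ring_scope.

Section Hilbert.
Variables (R : realType) (V : lmodType R[i]) (ip : V -> V -> R[i]).

Definition rC (t : R) : R[i] := Complex t 0.

Definition cvgC (u : nat -> R[i]) (l : R[i]) : Prop :=
  forall e : R, 0 < e -> exists N : nat, forall n : nat, (N <= n)%N ->
    `|u n - l| < rC e.

Definition inner_product_axioms : Prop :=
  [/\ forall (a : R[i]) (x y z : V), ip (a *: x + y) z = a * ip x z + ip y z,
      forall x y : V, ip y x = Num.conj (ip x y),
      forall x : V, 0 <= @complex.Re R (ip x x) &
      forall x : V, ip x x = 0 -> x = 0].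

Definition hnorm (x : V) : R := Num.sqrt (@complex.Re R (ip x x)).

Definition complete : Prop :=
  forall u : nat -> V,
    (forall e : R, 0 < e -> exists N : nat, forall m n : nat,
        (N <= m)%N -> (N <= n)%N -> hnorm (u m - u n) < e) ->
    exists l : V, forall e : R, 0 < e -> exists N : nat, forall n : nat,
        (N <= n)%N -> hnorm (u n - l) < e.

Definition separable : Prop :=
  exists d : nat -> V, forall (x : V) (e : R), 0 < e ->
    exists n : nat, hnorm (x - d n) < e.

Definition infinite_dimensional : Prop :=
  ~ exists s : seq V, forall x : V, exists c : nat -> R[i],
        x = \sum_(i < size s) c i *: s`_i.

Definition sep_inf_hilbert : Prop :=
  [/\ inner_product_axioms, complete, separable & infinite_dimensional].

(* a linear operator  T : dom(T) -> H,  dom(T) a (not necessarily closed or dense)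
   linear subspace; the values of T outside its domain are irrelevant *)
Definition linear_operator (D : V -> Prop) (T : V -> V) : Prop :=
  [/\ D 0,
      forall (a : R[i]) (x y : V), D x -> D y -> D (a *: x + y) &
      forall (a : R[i]) (x y : V), D x -> D y -> T (a *: x + y) = a *: T x + T y].

Definition num_range (D : V -> Prop) (T : V -> V) (l : R[i]) : Prop :=
  exists x : V, [/\ D x, hnorm x = 1 & ip (T x) x = l].

Definition weak_to_0 (u : nat -> V) : Prop :=
  forall y : V, cvgC (fun n => ip (u n) y) 0.

Definition ess_num_range (D : V -> Prop) (T : V -> V) (l : R[i]) : Prop :=
  exists u : nat -> V,
    [/\ forall n, D (u n), forall n, hnorm (u n) = 1, weak_to_0 u &
        cvgC (fun n => ip (T (u n)) (u n)) l].

End Hilbert.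

(* Main.v *)
Require Import Defs.
From mathcomp Require Import all_boot all_order all_algebra.
From mathcomp Require Import reals.
From mathcomp.real_closed Require Import complex.
From mathcomp Require Import ring lra.
From Stdlib Require Import IndefiniteDescription.
Import Order.TTheory GRing.Theory Num.Theory.
Local Open Scope ring_scope.

Section S.
Variable R : realType.
Local Notation C := R[i].
Definition nm (x : C) : R := complex.Re `|x|.
Lemma realC (x : C) : x \is Num.real -> x = rC (complex.Re x).
Proof. by move=> /RRe_real. Qed.
Lemma nC (x : C) : `|x| = rC (nm x).
Proof. by rewrite /nm -realC ?normr_real. Qed.
Lemma rCD (a b : R) : rC (a + b) = rC a + rC b.
Proof. exact: (rmorphD (real_complex R)). Qed.
Lemma rCM (a b : R) : rC (a * b) = rC a * rC b.
Proof. exact: (rmorphM (real_complex R)). Qed.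
Lemma rCN (a : R) : rC (- a) = - rC a.
Proof. exact: (rmorphN (real_complex R)). Qed.
Lemma rCV (a : R) : rC (a^-1) = (rC a)^-1.
Proof. exact: (fmorphV (real_complex R)). Qed.
Lemma rC1 : rC (1:R) = 1. Proof. by []. Qed.
Lemma rC0 : rC (0:R) = 0. Proof. by []. Qed.
Lemma rC_inj (a b : R) : rC a = rC b -> a = b.
Proof. by case. Qed.
Lemma ltC (a b : R) : (rC a < rC b) = (a < b).
Proof. exact: ltcR. Qed.
Lemma leC (a b : R) : (rC a <= rC b) = (a <= b).
Proof. exact: lecR. Qed.
Lemma conjrC (a : R) : (rC a)^* = rC a.
Proof. apply: conj_Creal. apply/complex_realP. by exists a. Qed.
Lemma nm_ge0 x : 0 <= nm x.
Proof. by have := normr_ge0 x; rewrite nC -rC0 leC. Qed.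
Lemma nmD x y : nm (x + y) <= nm x + nm y.
Proof. by rewrite -leC rCD -!nC ler_normD. Qed.
Lemma nmM x y : nm (x * y) = nm x * nm y.
Proof. by apply: rC_inj; rewrite rCM -!nC normrM. Qed.
Lemma nmN x : nm (- x) = nm x.
Proof. by rewrite /nm normrN. Qed.
Lemma nmB x y : nm (x - y) <= nm x + nm y.
Proof. by rewrite -(nmN y) nmD. Qed.
Lemma nmJ x : nm (x^*) = nm x.
Proof. by rewrite /nm norm_conjC. Qed.
Lemma nm_rC a : nm (rC a) = `|a|.
Proof. by rewrite /nm normc_def /= expr0n /= addr0 sqrtr_sqr. Qed.
Lemma nm1 : nm 1 = 1.
Proof. by rewrite -rC1 nm_rC normr1. Qed.
Lemma nmC_norm x : `|x| = rC (nm x). Proof. exact: nC. Qed.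

Lemma phase (c : C) : exists p : C, `|p| = 1 /\ p^* * c = `|c|.
Proof.
have [->|c0] := eqVneq c 0.
  by exists 1; rewrite normr1 mulr0 normr0.
have nc0 : `|c| != 0 by rewrite normr_eq0.
exists (c / `|c|); split.
  by rewrite normrM normfV normr_id divff.
rewrite fmorph_div /= conj_normC mulrAC -normCKC expr2.
by rewrite mulrAC divff // mul1r.
Qed.
Lemma normr1_conj (p : C) : `|p| = 1 -> p * p^* = 1.
Proof. by move=> h; rewrite -normCK h expr1n. Qed.

Variables (V : lmodType C) (ip : V -> V -> C).
Hypothesis Hip : inner_product_axioms ip.

Lemma ipl a x y z : ip (a *: x + y) z = a * ip x z + ip y z.
Proof. by case: Hip. Qed.
Lemma ipc x y : ip y x = (ip x y)^*.
Proof. by case: Hip. Qed.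
Lemma ippos x : 0 <= complex.Re (ip x x).
Proof. by case: Hip. Qed.
Lemma ip0l z : ip 0 z = 0.
Proof.
have h := ipl 1 0 0 z; rewrite scaler0 addr0 mul1r in h.
by have := congr1 (fun q => q - ip 0 z) h; rewrite subrr addrK.
Qed.
Lemma ipZl a x z : ip (a *: x) z = a * ip x z.
Proof. by have := ipl a x 0 z; rewrite addr0 ip0l addr0. Qed.
Lemma ipDl x y z : ip (x + y) z = ip x z + ip y z.
Proof. by have := ipl 1 x y z; rewrite scale1r mul1r. Qed.
Lemma ipr a x y z : ip z (a *: x + y) = a^* * ip z x + ip z y.
Proof. by rewrite ipc ipl rmorphD rmorphM /= -!ipc. Qed.
Lemma ipZr a x z : ip z (a *: x) = a^* * ip z x.
Proof. by rewrite ipc ipZl rmorphM /= -ipc. Qed.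
Lemma ipxx_real x : ip x x = rC (complex.Re (ip x x)).
Proof. apply: realC; rewrite CrealE; apply/eqP; by rewrite -ipc. Qed.
Lemma hnorm_sq x : hnorm ip x ^+ 2 = complex.Re (ip x x).
Proof. by rewrite /hnorm sqr_sqrtr // ippos. Qed.
Lemma hnorm1 x : hnorm ip x = 1 -> ip x x = 1.
Proof.
move=> h; have := hnorm_sq x; rewrite h expr1n => h1.
by rewrite ipxx_real -h1.
Qed.
Lemma hnorm1' x : ip x x = 1 -> hnorm ip x = 1.
Proof. by move=> h; rewrite /hnorm h /= sqrtr1. Qed.

Lemma rC2 : rC (2 : R) = 2.
Proof. exact: (rmorph_nat (real_complex R) 2). Qed.

Lemma ip_bound x y :
  nm (ip x y) <= (complex.Re (ip x x) + complex.Re (ip y y)) / 2.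
Proof.
have [p [np hp]] := phase (ip x y).
have h0 := ippos (x - p *: y).
have e : ip (x - p *: y) (x - p *: y) =
   rC (complex.Re (ip x x) + complex.Re (ip y y) - 2 * nm (ip x y)).
  have -> : x - p *: y = (- p) *: y + x by rewrite addrC scaleNr.
  rewrite ipl !ipr (ipc x y) rmorphN /=.
  rewrite !rCD rCN rCM -nC -!ipxx_real rC2.
  have pp := @normr1_conj p np.
  have h2 : p * (ip x y)^* = `|ip x y|.
    by rewrite -[p]conjCK -rmorphM /= hp conj_normC.
  apply/eqP; rewrite -subr_eq0; apply/eqP.
  transitivity ((p * p^* - 1) * ip y y - (p * (ip x y)^* - `|ip x y|)
     - (p^* * ip x y - `|ip x y|)); first ring.
  by rewrite pp h2 hp !subrr; ring.
rewrite e /= in h0; lra.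
Qed.

Variables (D : V -> Prop) (T : V -> V).
Hypothesis HT : linear_operator D T.

Lemma D0 : D 0. Proof. by case: HT. Qed.
Lemma Dl a x y : D x -> D y -> D (a *: x + y). Proof. by case: HT => _ h _; apply: h. Qed.
Lemma Tl a x y : D x -> D y -> T (a *: x + y) = a *: T x + T y.
Proof. by case: HT => _ _ h; apply: h. Qed.
Lemma T0 : T 0 = 0.
Proof.
have h := Tl 1 0 0 D0 D0; rewrite scaler0 addr0 scale1r in h.
by have := congr1 (fun q => q - T 0) h; rewrite subrr addrK.
Qed.
Lemma DZ a x : D x -> D (a *: x).
Proof. by move=> Dx; have := Dl a x 0 Dx D0; rewrite addr0. Qed.
Lemma TZ a x : D x -> T (a *: x) = a *: T x.
Proof. by move=> Dx; have := Tl a x 0 Dx D0; rewrite !addr0 T0 addr0. Qed.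

Lemma step (z w : C) (s δ η : R) (x u : V) :
  w != 0 -> 0 < s -> 0 < δ -> δ <= 1 -> 0 < η -> 4 * η <= 1 ->
  D x -> ip x x = 1 -> ip (T x) x = z + w * rC (s + s / δ ^+ 2) ->
  D u -> ip u u = 1 -> nm (ip (T u) u - z) <= η -> nm (ip u x) <= η ->
  nm (ip u (T x)) <= η ->
  exists v, [/\ D v, hnorm ip v = 1,
     nm (ip (T v) v - (z + w * rC s)) <= 4 * η * (1 + nm (z + w * rC s)) &
     forall y, nm (ip v y) <= 2 * nm (ip u y) + δ * (1 + complex.Re (ip y y))].
Proof.
move=> w0 s0 d0 d1 e0 e1 Dx xx Tx Du uu ha hux hutx.
set t := s + s / δ ^+ 2.
rewrite -/t in Tx.
set c := ip (T u) x.
have nw0 : 0 < nm w.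
  rewrite lt_def nm_ge0 andbT; apply: contra w0 => /eqP h.
  by rewrite -normr_eq0 nC h.
set c' := nm c / nm w.
have c'0 : 0 <= c' by rewrite divr_ge0 // nm_ge0.
have dd0 : 0 < δ ^+ 2 by rewrite exprn_gt0.
have ts : t - s = s / δ ^+ 2 by rewrite /t; ring.
have tsp : 0 < t - s by rewrite ts divr_gt0.
have tsd : (t - s) * δ ^+ 2 = s by rewrite ts divfK // gt_eqF.
have qarg : 0 < c' ^+ 2 + 4 * s * (t - s).
  have := mulr_gt0 s0 tsp; nra.
set q := Num.sqrt (c' ^+ 2 + 4 * s * (t - s)).
have q0 : 0 < q by rewrite sqrtr_gt0.
have qq : q ^+ 2 = c' ^+ 2 + 4 * s * (t - s) by rewrite sqr_sqrtr // ltW.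
have cq0 : 0 < c' + q by lra.
set r := 2 * s / (c' + q).
have r0 : 0 < r by rewrite divr_gt0 //; lra.
have rq : r * (c' + q) = 2 * s by rewrite /r divfK // gt_eqF.
have key0 : (t - s) * r ^+ 2 + r * c' - s = 0.
  have h1 : (r * q) ^+ 2 = (2 * s - r * c') ^+ 2.
    by congr (_ ^+ 2); rewrite -rq; ring.
  have h2 : 4 * s * ((t - s) * r ^+ 2 + r * c' - s) =
     (r * q) ^+ 2 - (2 * s - r * c') ^+ 2 - r ^+ 2 * (q ^+ 2 - (c' ^+ 2 + 4 * s * (t - s))).
    by ring.
  move: h2; rewrite h1 qq !subrr mulr0 subr0 => /eqP.
  rewrite mulf_eq0 => /orP [|/eqP //].
  by rewrite mulf_eq0 => /orP [] /eqP h; lra.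
have key : r ^+ 2 * t + r * c' - s * (1 + r ^+ 2) = 0.
  by rewrite -key0; ring.
have rd : r <= δ.
  have h1 : (t - s) * r ^+ 2 <= (t - s) * δ ^+ 2.
    rewrite tsd; have : 0 <= r * c' by rewrite mulr_ge0 // ltW.
    lra.
  rewrite ler_pM2l // in h1.
  rewrite leNgt; apply/negP => h; nra.
clearbody q r t.
have [pc [npc hpc]] := phase c.
have [pw [npw hpw]] := phase w.
set g := pc * pw^*.
have ppc := @normr1_conj pc npc.
have ppw := @normr1_conj pw npw.
have gg : g * g^* = 1.
  rewrite /g rmorphM /= conjCK.
  transitivity ((pc * pc^*) * (pw * pw^*)); first by ring.
  by rewrite ppc ppw mulr1.
have ng : nm g = 1.
  by rewrite /g nmM nmJ /nm npc npw mulr1.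
have wE : w = pw * `|w| by rewrite -hpw mulrA ppw mul1r.
have gc : g^* * c = w * rC c'.
  transitivity (pw * (pc^* * c)); first by rewrite /g rmorphM /= conjCK; ring.
  rewrite hpc /c' rCM rCV -!nC {1}wE.
  have nw : `|w| != 0 by rewrite normr_eq0.
  by field.
clearbody c'.
set b := rC r * g.
have bb : b * b^* = rC (r ^+ 2).
  rewrite /b rmorphM /= conjrC expr2 rCM.
  transitivity (rC r * rC r * (g * g^*)); first by ring.
  by rewrite gg mulr1.
have nb : nm b = r by rewrite /b nmM ng mulr1 nm_rC ger0_norm // ltW.
set v := b *: x + u.
have Dv : D v by apply: Dl.
have TV : T v = b *: T x + T u by apply: Tl.
set d := ip (T x) u.
have nd : nm d <= η by rewrite /d ipc nmJ.
set a := ip (T u) u.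
set e := b * ip x u + b^* * ip u x.
have ne : nm e <= 2 * r * η.
  apply: le_trans (nmD _ _) _.
  rewrite (nmM b) (nmM (b^*)) nmJ nb (ipc u x) nmJ.
  have : r * nm (ip u x) <= r * η by rewrite ler_pM2l.
  lra.
have vv : ip v v = 1 + rC (r ^+ 2) + e.
  rewrite /v ipl !ipr xx uu -bb /e; ring.
set M := complex.Re (ip v v).
have vvM : ip v v = rC M by rewrite /M -ipxx_real.
have eM : e = rC (M - 1 - r ^+ 2).
  by rewrite !rCD !rCN -vvM vv rC1; ring.
have r1 : r <= 1 by lra.
have M0 : 1 / 2 <= M.
  move: ne; rewrite eM nm_rC => h.
  have : r * η <= 1 / 4 by nra.
  have : 0 <= r ^+ 2 by rewrite exprn_ge0 // ltW.
  move: h; rewrite ler_norml => /andP [h1 h2].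
  lra.
have M0' : 0 < M by lra.
set E := ip (T v) v - (z + w * rC s) * rC M.
have TvV : ip (T v) v = rC (r ^+ 2) * (z + w * rC t) + b * d + rC r * (w * rC c') + a.
  rewrite TV /v ipl !ipr -/d -/a -/c Tx -bb -gc /b rmorphM /= conjrC; ring.
have EE : E = (a - z) + b * d - (z + w * rC s) * e.
  rewrite /E TvV.
  have eM' : rC M = 1 + rC (r ^+ 2) + e by rewrite -vvM vv.
  rewrite eM'.
  transitivity ((a - z) + b * d - (z + w * rC s) * e
     + w * rC (r ^+ 2 * t + r * c' - s * (1 + r ^+ 2))).
    rewrite rCD rCN rCD (rCM (r ^+ 2) t) (rCM r c') (rCM s) rCD rC1; ring.
  by rewrite key rC0 mulr0 addr0.
set A := nm (z + w * rC s).
have nE : nm E <= 2 * η * (1 + A).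
  rewrite EE.
  apply: le_trans (nmB _ _) _.
  apply: le_trans (lerD (nmD _ _) (lexx _)) _.
  rewrite (nmM b) nb (nmM _ e) -/A.
  have h1 : r * nm d <= η by nra.
  have h2 : A * nm e <= A * (2 * η) by rewrite ler_wpM2l ?nm_ge0 //; nra.
  have := nm_ge0 (z + w * rC s); rewrite -/A => hA.
  nra.
set sM := Num.sqrt M.
have sM0 : 0 < sM by rewrite sqrtr_gt0.
have sMM : sM ^+ 2 = M by rewrite sqr_sqrtr // ltW.
set k' := sM^-1.
have k'0 : 0 < k' by rewrite invr_gt0.
have kk : k' * k' = M^-1 by rewrite -invfM -expr2 sMM.
have kkC : rC k' * rC k' = rC (M^-1) by rewrite -rCM kk.
have mm : rC (M^-1) * rC M = 1 by rewrite -rCM mulVf ?gt_eqF.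
have Mi0 : 0 < M^-1 by rewrite invr_gt0.
have Mi2 : M^-1 <= 2.
  have : M^-1 * M = 1 by rewrite mulVf ?gt_eqF.
  nra.
have sMh : 1 / 2 <= sM.
  rewrite leNgt; apply/negP => h; nra.
have k'2 : k' <= 2.
  have : k' * sM = 1 by rewrite mulVf ?gt_eqF.
  nra.
clearbody k' sM.
exists (rC k' *: v); split.
- exact: DZ _ _ Dv.
- apply: hnorm1'.
  by rewrite ipZl ipZr conjrC vvM mulrA kkC mm.
- rewrite (TZ _ _ Dv) ipZl ipZr conjrC.
  have -> : rC k' * (rC k' * ip (T v) v) - (z + w * rC s) = rC (M^-1) * E.
    transitivity (rC k' * rC k' * ip (T v) v - (z + w * rC s) * (rC (M^-1) * rC M)).
      by rewrite mm; ring.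
    by rewrite kkC /E; ring.
  rewrite nmM nm_rC (ger0_norm (ltW Mi0)).
  have := nm_ge0 E; have := nm_ge0 (z + w * rC s); rewrite -/A => hA hE.
  have : M^-1 * nm E <= 2 * nm E by rewrite ler_wpM2r.
  lra.
move=> y.
rewrite ipZl /v ipl nmM nm_rC (ger0_norm (ltW k'0)).
have hx := ip_bound x y; rewrite xx /= in hx.
have h1 := nmD (b * ip x y) (ip u y).
rewrite nmM nb in h1.
have := nm_ge0 (ip x y); have := nm_ge0 (ip u y).
have := ippos y.
move=> hy hu hxy.
have h2 : r * nm (ip x y) <= δ * ((1 + complex.Re (ip y y)) / 2).
  by apply: ler_pM => //; apply: ltW.
have h3 : k' * nm (b * ip x y + ip u y) <= 2 * nm (b * ip x y + ip u y).
  by rewrite ler_wpM2r ?nm_ge0.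
lra.
Qed.

Lemma nm_lt (X : C) (e : R) : `|X| < rC e -> nm X <= e.
Proof. by rewrite nC ltC => /ltW. Qed.

Lemma small (c e m : R) : 0 <= c -> 0 < e -> c / e < m -> 0 < m -> 1 / m * c < e.
Proof.
move=> c0 e0 h m0.
have h1 : c < m * e by rewrite -(ltr_pM2r e0) divfK ?gt_eqF // in h.
have m1 : 0 < 1 / m by rewrite divr_gt0.
have : 1 / m * (m * e) = e by rewrite mulrA mul1r mulVf ?gt_eqF // mul1r.
move=> <-; by rewrite ltr_pM2l.
Qed.

Lemma main (z w : C) : ess_num_range ip D T z -> w != 0 ->
  (forall t : R, 0 < t -> num_range ip D T (z + w * rC t)) ->
  forall s : R, 0 <= s -> ess_num_range ip D T (z + w * rC s).
Proof.
move=> [u [Du nu wu cu]] w0 Hnum s; rewrite le_eqVlt => /orP [/eqP <- | s0].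
  by rewrite rC0 mulr0 addr0; exists u.
set A := nm (z + w * rC s).
have hA : 0 <= A by apply: nm_ge0.
have P : forall k : nat, exists v, [/\ D v, hnorm ip v = 1,
    nm (ip (T v) v - (z + w * rC s)) <= 1 / (k.+1%:R) &
    exists n, (k <= n)%N /\ forall y, nm (ip v y) <=
       2 * nm (ip (u n) y) + 1 / (k.+1%:R) * (1 + complex.Re (ip y y))].
  move=> k.
  have m0 : 0 < k.+1%:R :> R by rewrite ltr0n.
  set δ := 1 / (k.+1%:R : R).
  have d0 : 0 < δ by rewrite divr_gt0.
  have d1 : δ <= 1 by rewrite ler_pdivrMr // mul1r ler1n.
  set Pk := (k.+1%:R : R) * (1 + A).
  have P1 : 1 <= Pk.
    have : 1 <= k.+1%:R :> R by rewrite ler1n.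
    rewrite /Pk; nra.
  set η := 1 / (4 * Pk).
  have e0 : 0 < η by rewrite divr_gt0 // mulr_gt0 //; lra.
  have eP : η * (4 * Pk) = 1 by rewrite /η mul1r mulVf // gt_eqF // mulr_gt0 //; lra.
  have e1 : 4 * η <= 1 by nra.
  have tp : 0 < s + s / δ ^+ 2 by rewrite ltr_wpDr ?divr_ge0 ?exprn_ge0 // ltW.
  have [x [Dx hx Tx]] := Hnum _ tp.
  have xx := hnorm1 _ hx.
  have [N1 h1] := cu η e0.
  have [N2 h2] := wu x η e0.
  have [N3 h3] := wu (T x) η e0.
  set n := maxn k (maxn N1 (maxn N2 N3)).
  have kn : (k <= n)%N by rewrite leq_maxl.
  have n1 : (N1 <= n)%N.
    by rewrite /n (leq_trans (leq_maxl N1 (maxn N2 N3))) // leq_maxr.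
  have n2 : (N2 <= n)%N.
    by rewrite /n (leq_trans (leq_maxl N2 N3)) // (leq_trans (leq_maxr N1 _)) // leq_maxr.
  have n3 : (N3 <= n)%N.
    by rewrite /n (leq_trans (leq_maxr N2 N3)) // (leq_trans (leq_maxr N1 _)) // leq_maxr.
  have := step _ _ _ _ _ _ _ w0 s0 d0 d1 e0 e1 Dx xx Tx (Du n) (hnorm1 _ (nu n))
     (nm_lt _ _ (h1 n n1)).
  have h2' := nm_lt _ _ (h2 n n2); have h3' := nm_lt _ _ (h3 n n3).
  rewrite /= subr0 in h2'; rewrite /= subr0 in h3'.
  move=> /(_ h2' h3') [v [Dv nv hv hw]].
  exists v; split => //.
    apply: (le_trans hv); rewrite le_eqVlt; apply/orP; left; apply/eqP.
    have A1 : 1 + A != 0 by rewrite gt_eqF //; lra.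
    have m1 : k.+1%:R != 0 :> R by rewrite gt_eqF.
    rewrite /η /Pk -/A /δ; have m1' : (1 + k%:R : R) != 0 by rewrite addrC natr1. field; by rewrite m1' A1.
  by exists n; split => // y.
pose f k := proj1_sig (constructive_indefinite_description _ (P k)).
have Hf k := proj2_sig (constructive_indefinite_description _ (P k)).
exists f; split.
- by move=> k; case: (Hf k).
- by move=> k; case: (Hf k).
- move=> y e e0.
  set Y := complex.Re (ip y y).
  have hY : 0 <= Y := ippos y.
  have e4 : 0 < e / 4 by rewrite divr_gt0.
  have [N1 hN1] := wu y (e / 4) e4.
  set B := 2 * (1 + Y) / e.
  have B0 : 0 <= B by rewrite /B divr_ge0 ?ltW //; lra.
  have hK := archi_boundP B0.
  exists (maxn N1 (Num.Def.archi_bound B)) => n.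
  rewrite geq_max => /andP [n1 nK].
  case: (Hf n) => _ _ _ [n' [nn' hb]].
  have hb' := hb y; rewrite -/Y -/(f n) in hb'.
  have h1 := nm_lt _ _ (hN1 n' (leq_trans n1 nn')).
  rewrite /= subr0 in h1.
  have mK : B < n.+1%:R.
    apply: (lt_le_trans hK); rewrite ler_nat; exact: leqW.
  have c0 : 0 <= 2 * (1 + Y) by lra.
  have := small _ _ _ c0 e0 mK (ltr0Sn _ _).
  rewrite subr0 nC ltC.
  set im := 1 / n.+1%:R in hb' *; lra.
- move=> e e0.
  have B0 : 0 <= 1 / e by rewrite divr_ge0 ?ltW.
  have hK := archi_boundP B0.
  exists (Num.Def.archi_bound (1 / e)) => n nK.
  case: (Hf n) => _ _ hb _.
  rewrite nC ltC; apply: (le_lt_trans hb).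
  have mK : 1 / e < n.+1%:R.
    apply: (lt_le_trans hK); rewrite ler_nat; exact: leqW.
  by have := small _ _ _ ler01 e0 mK (ltr0Sn _ _); rewrite mulr1.
Qed.
End S.

Theorem proposition2p4 (R : realType) (V : lmodType R[i]) (ip : V -> V -> R[i])
    (HV : sep_inf_hilbert ip) (D : V -> Prop) (T : V -> V)
    (HT : linear_operator D T) (z w : R[i]) :
  ess_num_range ip D T z -> w != 0 ->
  (forall t : R, 0 < t -> num_range ip D T (z + w * rC t)) ->
  forall t : R, 0 <= t -> ess_num_range ip D T (z + w * rC t).
Proof.
case: HV => Hip _ _ _.
exact: (main _ _ _ Hip _ _ HT).
Qed.
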